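(* Let $\sigma$ and $\phi$ be two permutations of $\{1,\dots,n\}$, let $S\subseteq\{1,\dots,n\}$, and let $\theta$ be defined by $\theta(a)=\sigma(a)$ if $a\in S$ and $\theta(a)=\phi(a)$ if $a\notin S$. Then $\theta$ is a permutation if and only if $S$ is stable by $\phi^{-1}\sigma$. Moreover, in that case $\theta_{|S}=\phi_{|S}(\phi^{-1}\sigma)_{|S}$.
   Context: Permutations compose right to left ($(\phi^{-1}\sigma)(a)=\phi^{-1}(\sigma(a))$). For a permutation $\pi$ of a set $H$ and $S\subseteq H$, the restriction $\pi_{|S}$ is the permutation of $S$ whose cycles are obtained from those of $\pi$ by erasing the elements not in $S$; equivalently $\pi_{|S}(s)=\pi^k(s)$ where $k\ge1$ is least with $\pi^k(s)\in S$. *)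

(* Defs.v *)
From mathcomp Require Import all_boot all_fingroup.
Set Implicit Arguments. Unset Strict Implicit. Unset Printing Implicit Defensive.

(* Restriction of a map pi : T -> T to S (intended for permutations):
   perm_restr pi S s = pi^k(s) where k >= 1 is least with pi^k(s) \in S.
   For a permutation of the finite type T and s \in S such a k always exists
   and satisfies k <= #|T|, so searching k in 1 .. #|T| is exact.
   (If no such k exists, which never happens for permutations, we return s.) *)
Definition perm_restr (T : finType) (pi : T -> T) (S : {set T}) (s : T) : T :=
  let ks := iota 1 #|T| in
  let P := fun k => iter k pi s \in S in
  if has P ks then iter (nth 0 ks (find P ks)) pi s else s.

(* Main.v *)
Require Import Defs.
From mathcomp Require Import all_boot all_fingroup.

Lemma find_eq_prefix (p q : pred nat) (s : seq nat) :
  (forall i, i < size s -> (forall j, j < i -> ~~ q (nth 0 s j)) ->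
     p (nth 0 s i) = q (nth 0 s i)) -> find p s = find q s.
Proof.
elim: s => [//|x s IH] H /=.
have H0 := H 0 isT (fun j (hj : j < 0) => False_ind _ (notF hj)).
rewrite /= in H0; rewrite H0.
case qx: (q x) => //; congr _.+1; apply: IH => i hi hj.
apply: (H i.+1) => // -[|j] hji /=; first by rewrite qx.
exact: hj.
Qed.

Lemma restr_transfer (T : finType) (f g : T -> T) (S : {set T}) (s t : T) :
  has (fun k => iter k g t \in S) (iota 1 #|T|) ->
  (forall k, 0 < k -> (forall i, 0 < i < k -> iter i g t \notin S) ->
     iter k f s = iter k g t) ->
  perm_restr f S s = perm_restr g S t.
Proof.
move=> hQ Hit; rewrite /perm_restr.
set N := #|T|.
set P := fun k => iter k f s \in S.
set Q := fun k => iter k g t \in S.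
have Hf : find P (iota 1 N) = find Q (iota 1 N).
  apply: find_eq_prefix => i; rewrite size_iota => hi hj.
  rewrite nth_iota // /P /Q Hit // => i' /andP[i'0 i'i].
  case: i' i'0 i'i => [//|j] _; rewrite add1n ltnS => ji.
  by have := hj j ji; rewrite nth_iota // (ltn_trans ji hi).
have hm : find Q (iota 1 N) < N by move: hQ; rewrite has_find size_iota.
rewrite (has_find P) (has_find Q) Hf size_iota hm.
rewrite nth_iota // Hit // => i /andP[i0 ii].
case: i i0 ii => [//|j] _; rewrite add1n ltnS => ji.
have := before_find 0 ji; rewrite nth_iota ?(ltn_trans ji hm) //.
by rewrite /Q add1n => ->.
Qed.

(* Paper composes right to left: (phi^-1 sigma)(a) = phi^-1 (sigma a). *)
Theorem mainTheorem6 (n : nat) (sigma phi : {perm 'I_n}) (S : {set 'I_n}) :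
  let theta := fun a : 'I_n => if a \in S then sigma a else phi a in
  let psi := fun a : 'I_n => (phi^-1)%g (sigma a) in
  (bijective theta <-> {in S, forall a, psi a \in S}) /\
  ({in S, forall a, psi a \in S} ->
     {in S, forall s, perm_restr theta S s
                      = perm_restr phi S (perm_restr psi S s)}).
Proof.
move=> theta psi.
have phipsi a : phi (psi a) = sigma a by rewrite /psi permKV.
split.
  split.
    move=> /bij_inj inj a aS; apply/negPn/negP => bS.
    have : theta (psi a) = theta a by rewrite /theta aS (negbTE bS) phipsi.
    by move/inj => e; move: bS; rewrite e aS.
  move=> stab; apply: injF_bij => a b; rewrite /theta.
  case aS: (a \in S); case bS: (b \in S).
  - exact: perm_inj.
  - move=> e; have : b = psi a by rewrite /psi e permK.
    by move=> eb; move: (stab a aS); rewrite -eb bS.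
  - move=> e; have : a = psi b by rewrite /psi -e permK.
    by move=> ea; move: (stab b bS); rewrite -ea aS.
  - exact: perm_inj.
move=> stab s sS.
have -> : perm_restr psi S s = psi s.
  rewrite /perm_restr.
  have : 0 < #|'I_n| by apply/card_gt0P; exists s.
  case: #|'I_n| => [//|N] _ /=.
  by rewrite stab.
apply: restr_transfer.
  apply/hasP; exists (fingraph.order phi (psi s)).
    rewrite mem_iota fingraph.order_gt0 /= add1n ltnS.
    rewrite -size_orbit -(card_uniqP (orbit_uniq _ _)); exact: max_card.
  by rewrite iter_order ?stab //; apply: perm_inj.
move=> k k0 Hk.
elim: k k0 Hk => [//|k IH] _ Hk.
case: k IH Hk => [|k] IH Hk.
  by rewrite /= /theta sS phipsi.
rewrite iterS IH // ?iterS.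
  rewrite /theta.
  by have := Hk k.+1; rewrite ltnSn => /(_ isT); rewrite iterS => /negbTE ->.
by move=> i /andP[i0 ii]; apply: Hk; rewrite i0 (ltn_trans ii).
Qed.
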